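(* Let $p\in(1,\infty)$ and let $s\ge 2$ be an integer. For an integer $b$ with $0\le b\le s$, let $f(b)=\min_{c\in\mathbb{R}}\big((s-b)|c|^p+b|1-c|^p\big)$, the contribution to the $\operatorname{dist}_p$-cost of a cluster of $s$ vectors with entries in $\{0,1\}$ from a coordinate in which exactly $b$ of the vectors have value $1$ and $s-b$ have value $0$. Then $f(b)/b$ is strictly decreasing in $b$ for $0<b<s$.
   Context: For $p>0$, $\operatorname{dist}_p(x,y)=\sum_{i=1}^d|x[i]-y[i]|^p$; the cost of a cluster $C$ is $\min_{c\in\mathbb{R}^d}\sum_{x\in C}\operatorname{dist}_p(x,c)$, which decomposes as a sum over coordinates of the optimal one-dimensional contributions. *)

(* Defs.v *)
From HB Require Import structures.
From mathcomp Require Import all_boot all_order all_algebra.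
From mathcomp Require Import all_classical all_reals all_analysis.
Set Implicit Arguments. Unset Strict Implicit. Unset Printing Implicit Defensive.
Import Order.TTheory GRing.Theory Num.Theory.
Local Open Scope classical_set_scope.
Local Open Scope ring_scope.

(* Cost of one coordinate with b ones and (s - b) zeros among s binary
   vectors, for dist_p:  min_{c in R} ((s-b)|c|^p + b|1-c|^p).
   The minimum is written as the infimum over c (it is attained). *)
Definition coord_cost (R : realType) (p : R) (s b : nat) : R :=
  inf [set ((s - b)%:R * (`|c| `^ p) + b%:R * (`|1 - c| `^ p)) | c in [set: R]].

(* Main.v *)
Require Import Defs.
From HB Require Import structures.
From mathcomp Require Import all_boot all_order all_algebra.
From mathcomp Require Import all_classical all_reals all_analysis.
From mathcomp Require Import ring lra.
Import Order.TTheory GRing.Theory Num.Theory.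
Local Open Scope ring_scope.

Section S.
Variable R : realType.
Implicit Types (p t c : R).

Definition hh p t c : R := t * (`|c| `^ p) + `|1 - c| `^ p.

Lemma upper_c0 p t : 1 < p -> 0 < t -> exists c0 : R, 0 < c0 /\ c0 <= 1/2 /\
  hh p t c0 <= 1 - c0 / 2.
Proof.
move=> p1 t0.
set K : R := (2 * t)^-1.
have K0 : 0 < K by rewrite invr_gt0; lra.
set c0 : R := Num.min (1/2) (K `^ (p - 1)^-1).
have c0pos : 0 < c0 by rewrite lt_min powR_gt0 // andbT; lra.
have c0le : c0 <= 1/2 by rewrite ge_min lexx.
have c0K : c0 <= K `^ (p - 1)^-1 by rewrite ge_min lexx orbT.
exists c0; split => //; split => //.
have pm1 : 0 <= p - 1 by lra.
have h1 : c0 `^ (p - 1) <= K.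
  have := @ge0_ler_powR R (p - 1) pm1 c0 (K `^ (p - 1)^-1).
  rewrite !nnegrE powR_ge0 ltW //; move=> /(_ isT isT c0K).
  by rewrite -powRrM mulVf ?powRr1 ?(ltW K0) //; lra.
have h2 : `|1 - c0| `^ p <= 1 - c0.
  rewrite ger0_norm; last lra.
  apply: ge1r_powR; [apply/andP; split; lra | lra].
rewrite /hh ger0_norm; last lra.
rewrite -(mulr_powRB1 (ltW c0pos)) ?(lt_trans _ p1) //.
have : t * (c0 * c0 `^ (p - 1)) <= t * (c0 * K).
  by rewrite ler_pM2l // ler_pM2l.
have -> : t * (c0 * K) = c0 / 2.
  by rewrite /K; field; lra.
lra.
Qed.

Lemma gapA p t1 t2 : 1 < p -> 0 < t2 -> t2 < t1 ->
  exists c0 e : R, 0 < e /\ forall c,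
    (hh p t2 c + e <= hh p t1 c) \/ (hh p t2 c0 + e <= hh p t1 c).
Proof.
move=> p1 t20 t12.
have [c0 [c0pos [c0le hc0]]] := @upper_c0 p t2 p1 t20.
set a : R := 1 - c0 / 4.
have a0 : 0 < a by rewrite /a; lra.
have a1 : a < 1 by rewrite /a; lra.
set q : R := a `^ p^-1.
have p0 : 0 < p by lra.
have pinv0 : 0 < p^-1 by rewrite invr_gt0.
have q1 : q < 1.
  have := @gt0_ltr_powR R p^-1 pinv0 a 1.
  by rewrite !nnegrE powR1 (ltW a0) ler01; move=> /(_ isT isT a1).
have qp : q `^ p = a by rewrite /q -powRrM mulVf ?powRr1 ?(ltW a0) //; lra.
set d : R := 1 - q.
have d0 : 0 < d by rewrite /d; lra.
exists c0, (Num.min ((t1 - t2) * d `^ p) (c0 / 4)); split.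
  by rewrite lt_min mulr_gt0 ?powR_gt0 //; lra.
move=> c.
have [cd|cd] := leP d `|c|.
  left.
  have H : d `^ p <= `|c| `^ p.
    by apply: (@ge0_ler_powR R p (ltW p0)) => //; rewrite nnegrE ?ltW.
  have : (t1 - t2) * d `^ p <= (t1 - t2) * `|c| `^ p.
    by apply: ler_wpM2l => //; lra.
  move: H.
  rewrite /hh.
  have : Num.min ((t1 - t2) * d `^ p) (c0 / 4) <= (t1 - t2) * d `^ p.
    by rewrite ge_min lexx.
  nra.
right.
have hq : q <= `|1 - c|.
  have : 1 - `|c| <= `|1 - c|.
    by have := lerB_dist 1 c; rewrite normr1.
  rewrite /d in cd; lra.
have : a <= `|1 - c| `^ p.
  rewrite -qp; apply: (@ge0_ler_powR R p (ltW p0)) => //; rewrite nnegrE //.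
  by rewrite /q powR_ge0.
have : 0 <= t1 * `|c| `^ p by rewrite mulr_ge0 ?powR_ge0 //; lra.
have : Num.min ((t1 - t2) * d `^ p) (c0 / 4) <= c0 / 4 by rewrite ge_min lexx orbT.
rewrite /hh /a in hc0 *; lra.
Qed.

Lemma V_eq (p : R) (s b : nat) (c : R) : (0 < b)%N -> (b <= s)%N ->
  ((s - b)%:R * (`|c| `^ p) + b%:R * (`|1 - c| `^ p)) / b%:R
  = hh p ((s%:R - b%:R) / b%:R) c.
Proof.
move=> b0 bs; rewrite natrB // /hh.
have : (b%:R : R) != 0 by rewrite pnatr_eq0 -lt0n.
move=> H; field; exact: H.
Qed.

Local Open Scope classical_set_scope.
Definition SS (p : R) (s b : nat) : set R :=
  [set ((s - b)%:R * (`|c| `^ p) + b%:R * (`|1 - c| `^ p)) | c in [set: R]].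
End S.

Theorem claim12 (R : realType) (p : R) (s : nat) :
  1 < p -> (2 <= s)%N ->
  forall b1 b2 : nat, (0 < b1)%N -> (b1 < b2)%N -> (b2 < s)%N ->
    coord_cost p s b2 / b2%:R < coord_cost p s b1 / b1%:R.
Proof.
move=> p1 s2 b1 b2 b10 b12 b2s.
have b20 : (0 < b2)%N by apply: leq_trans b12.
have B1 : (0 : R) < b1%:R by rewrite ltr0n.
have B2 : (0 : R) < b2%:R by rewrite ltr0n.
have B12 : (b1%:R : R) < b2%:R by rewrite ltr_nat.
have B2s : (b2%:R : R) < s%:R by rewrite ltr_nat.
set t1 : R := (s%:R - b1%:R) / b1%:R.
set t2 : R := (s%:R - b2%:R) / b2%:R.
have t20 : 0 < t2 by rewrite /t2 divr_gt0 //; lra.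
have t12 : t2 < t1.
  rewrite /t2 /t1 ltr_pdivrMr // mulrAC ltr_pdivlMr //.
  nra.
have [c0 [e [e0 He]]] := @gapA R p t1 t2 p1 t20 t12.
set S := SS R p s.
have lbS : forall b, has_lbound (S b).
  move=> b; exists 0 => _ [c _ <-].
  by rewrite addr_ge0 // mulr_ge0 ?powR_ge0.
have neS : forall b, nonempty (S b).
  by move=> b; exists ((s - b)%:R * (`|0 : R| `^ p) + b%:R * (`|1 - 0 : R| `^ p)); exists 0.
rewrite /coord_cost -/(SS R p s b1) -/(SS R p s b2) -/(S b1) -/(S b2).
set G2 := inf (S b2).
have G2c : forall c : R, G2 / b2%:R <= hh R p t2 c.
  move=> c; rewrite /t2 -(@V_eq R p s) //; last by apply: ltnW.
  rewrite ler_pM2r ?invr_gt0 //.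
  by apply: ge_inf => //; exists c.
have lb : b1%:R * (G2 / b2%:R + e) <= inf (S b1).
  apply: lb_le_inf => // _ [c _ <-].
  rewrite -ler_pdivlMl // [X in _ <= X]mulrC (@V_eq R p s) //; last first.
    by apply: ltnW; apply: ltn_trans b2s.
  rewrite -/t1 mulrC.
  have := G2c c; have := G2c c0.
  case: (He c) => H; lra.
rewrite -ler_pdivlMl // in lb.
have H : G2 / b2%:R < G2 / b2%:R + e by lra.
apply: (lt_le_trans H).
move: lb; set u := inf (S b1); rewrite [X in _ <= X -> _]mulrC; exact.
Qed.
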